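(* Let $K\subseteq V$ be a regular closed convex cone and $e\in\operatorname{int}(K)$. If $|||\cdot|||=\|\cdot\|_e$, then for all $L\in\mathrm{Gr}(V,m)$ $$\nu(L)=\min_{u\in\Delta(K^* )}\max_{x\in L,\|x\|\le1}\langle x,u\rangle=\max_{x\in L,\|x\|\le1}\min_{u\in\Delta(K^* )}\langle x,u\rangle=\max_{x\in L,\|x\|\le1}\lambda_e(x).$$
   Context: $V$ is a finite-dimensional real vector space with inner product $\langle\cdot,\cdot\rangle$; $K^*:=\{u:\langle u,x\rangle\ge0\ \forall x\in K\}$; $L^\perp$ is the orthogonal complement; $\mathrm{Gr}(V,m)$ is the set of $m$-dimensional subspaces ($1\le m<\dim V$). $\|\cdot\|$ is an arbitrary norm on $V$ with dual norm $\|u\|^*:=\max_{\|x\|=1}\langle u,x\rangle$. The norm induced by $(K,e)$ is $\|x\|_e:=\min\{\alpha\ge0: x+\alpha e\in K,\ -x+\alpha e\in K\}$, with dual norm $\|u\|_e^*:=\max_{\|x\|_e=1}\langle u,x\rangle$ (which equals $\langle u,e\rangle$ for $u\in K^*$). $\Delta(K^* ):=\{u\in K^*:\langle u,e\rangle=1\}$. The eigenvalue map is $\lambda_e(x):=\max\{t\in\mathbb R: x-te\in K\}$. With $|||\cdot|||$ a norm on $V$ with dual norm $|||\cdot|||^*$, $\nu(L):=\min\{\|y-u\|^*:u\in K^*,y\in L^\perp,|||u|||^*=1\}$. *)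

(* Defs.v *)
From mathcomp Require Import ssreflect ssrfun ssrbool eqtype ssrnat seq fintype bigop.
From Stdlib Require Import Reals.
Open Scope R_scope.

Definition vec (n : nat) := 'I_n -> R.

Definition vzero {n} : vec n := fun _ => 0.
Definition vadd {n} (x y : vec n) : vec n := fun i => x i + y i.
Definition vopp {n} (x : vec n) : vec n := fun i => - x i.
Definition vsub {n} (x y : vec n) : vec n := fun i => x i - y i.
Definition vscale {n} (a : R) (x : vec n) : vec n := fun i => a * x i.
Definition veq {n} (x y : vec n) : Prop := forall i, x i = y i.

Definition inner {n} (x y : vec n) : R := \big[Rplus/0]_(i < n) (x i * y i).

Definition lincomb {n m} (c : 'I_m -> R) (b : 'I_m -> vec n) : vec n :=
  fun i => \big[Rplus/0]_(j < m) (c j * b j i).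

Definition IsMin (S : R -> Prop) (v : R) : Prop := S v /\ forall w, S w -> v <= w.
Definition IsMax (S : R -> Prop) (v : R) : Prop := S v /\ forall w, S w -> w <= v.

Record IsNorm {n} (N : vec n -> R) : Prop := {
  norm_def : forall x, N x = 0 <-> veq x vzero;
  norm_hom : forall a x, N (vscale a x) = Rabs a * N x;
  norm_tri : forall x y, N (vadd x y) <= N x + N y }.

Definition dual_norm_is {n} (N : vec n -> R) (u : vec n) (t : R) : Prop :=
  IsMax (fun s => exists x, N x = 1 /\ s = inner u x) t.

Definition is_closed {n} (K : vec n -> Prop) : Prop :=
  forall (s : nat -> vec n) (x : vec n),
    (forall k, K (s k)) -> (forall i, Un_cv (fun k => s k i) (x i)) -> K x.

Definition is_convex_cone {n} (K : vec n -> Prop) : Prop :=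
  K vzero /\
  (forall x y, K x -> K y -> K (vadd x y)) /\
  (forall a x, 0 <= a -> K x -> K (vscale a x)).

Definition in_interior {n} (K : vec n -> Prop) (e : vec n) : Prop :=
  exists eps, 0 < eps /\ forall y, inner (vsub y e) (vsub y e) < eps * eps -> K y.

Definition is_pointed {n} (K : vec n -> Prop) : Prop :=
  forall x, K x -> K (vopp x) -> veq x vzero.

Definition regular_closed_convex_cone {n} (K : vec n -> Prop) : Prop :=
  is_closed K /\ is_convex_cone K /\ is_pointed K /\ exists e, in_interior K e.

Definition dual_cone {n} (K : vec n -> Prop) : vec n -> Prop :=
  fun u => forall x, K x -> 0 <= inner u x.

Definition DeltaK {n} (K : vec n -> Prop) (e : vec n) : vec n -> Prop :=
  fun u => dual_cone K u /\ inner u e = 1.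

Definition enorm_is {n} (K : vec n -> Prop) (e x : vec n) (t : R) : Prop :=
  IsMin (fun a => 0 <= a /\ K (vadd x (vscale a e)) /\ K (vadd (vopp x) (vscale a e))) t.

Definition dual_enorm_is {n} (K : vec n -> Prop) (e u : vec n) (t : R) : Prop :=
  IsMax (fun s => exists x, enorm_is K e x 1 /\ s = inner u x) t.

Definition lambda_is {n} (K : vec n -> Prop) (e x : vec n) (t : R) : Prop :=
  IsMax (fun s => K (vsub x (vscale s e))) t.

Definition lin_indep {n m} (b : 'I_m -> vec n) : Prop :=
  forall c : 'I_m -> R, veq (lincomb c b) vzero -> forall j, c j = 0.

Definition in_Gr {n} (m : nat) (L : vec n -> Prop) : Prop :=
  exists b : 'I_m -> vec n, lin_indep b /\
    forall x, L x <-> exists c : 'I_m -> R, veq x (lincomb c b).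

Definition orth {n} (L : vec n -> Prop) : vec n -> Prop :=
  fun y => forall x, L x -> inner y x = 0.

(* nu(L) with |||.||| = ||.||_e :
   the set {dual norm of (y-u) : u in K^*, y in L^perp, dual e-norm of u = 1} *)
Definition nu_set {n} (N : vec n -> R) (K : vec n -> Prop) (e : vec n)
    (L : vec n -> Prop) : R -> Prop :=
  fun t => exists u y, dual_cone K u /\ orth L y /\ dual_enorm_is K e u 1 /\
    dual_norm_is N (vsub y u) t.

(* Main.v *)
Require Import Defs.
From mathcomp Require Import ssreflect ssrfun ssrbool eqtype ssrnat seq fintype bigop.
From mathcomp Require Import all_algebra.
From mathcomp Require Import classical_sets boolp reals topology normedtype sequences Rstruct Rstruct_topology.
From Stdlib Require Import Reals Lra FunctionalExtensionality Classical.
Open Scope R_scope.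

Definition myeps {A : Type} (a0 : A) (P : A -> Prop) : A :=
  match pselect (exists x, P x) with left h => proj1_sig (cid h) | right _ => a0 end.
Lemma myeps_spec {A : Type} (a0 : A) (P : A -> Prop) : (exists x, P x) -> P (myeps a0 P).
Proof. rewrite /myeps; case: pselect => // h _; exact: (proj2_sig (cid h)). Qed.

Lemma BW1 (u : nat -> R) (M : R) : (forall k, Rabs (u k) <= M) ->
  exists phi : nat -> nat, (forall k, (phi k < phi (S k))%nat) /\
    exists l, Un_cv (fun k => u (phi k)) l.
Proof.
move=> hM.
have [|f fi cf] := bolzano_weierstrass (u_:=u).
  exists M; split; first by apply: Num.Theory.num_real.
  move=> r hr x _ /=. apply/RleP. move/RltP: hr. have := hM x.
  change (Rabs (u x) <= M -> M < r -> Rabs (u x) <= r). lra.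
exists f; split.
  move=> k; rewrite ltnNge; apply/negP => h.
  have E := fi k.+1 k. rewrite /= in E. move: E.
  change (leq (f k.+1) (f k) = leq k.+1 k -> False). by rewrite h ltnn.
move/cvg_ex: cf => [l hl]. exists l.
move=> eps heps.
have H2 := proj1 (@cvgrPdist_lt R R^o nat _ _ (u \o f) l) hl.
have H3 := H2 ltac:(apply: filter_class) eps ltac:(by apply/RltP). move: H3.
case=> N _ HN. exists N => n hn.
have := HN n. simpl. move=> H. have := H (introT leP hn). move/RltP.
change (Rabs (l - u (f n)) < eps -> R_dist (u (f n)) l < eps).
rewrite /R_dist Rabs_minus_sym. done.
Qed.

Lemma sup_ex (A : R -> Prop) : (exists a, A a) -> (exists b, forall a, A a -> a <= b) ->
  exists s, (forall a, A a -> a <= s) /\ (forall b, (forall a, A a -> a <= b) -> s <= b).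
Proof.
move=> hne hb.
have [s [h1 h2]] := completeness A hb hne.
exists s; split; [exact: h1 | exact: h2].
Qed.

Lemma inf_ex (A : R -> Prop) : (exists a, A a) -> (exists b, forall a, A a -> b <= a) ->
  exists s, (forall a, A a -> s <= a) /\ (forall b, (forall a, A a -> b <= a) -> b <= s).
Proof.
move=> [a0 ha0] [b hb].
have e1 : exists x, A (- x) by exists (- a0); rewrite Ropp_involutive.
have e2 : exists c, forall x, A (- x) -> x <= c.
  by exists (- b) => x hx; have := hb _ hx; lra.
have [s [h1 h2]] := sup_ex (fun x => A (- x)) e1 e2.
exists (- s); split.
  move=> a ha. have : A (- - a) by rewrite Ropp_involutive.
  move/h1. lra.
move=> c hc. have : s <= - c.
  apply: h2 => x hx; have := hc _ hx; lra.
lra.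
Qed.

Lemma incr_ge (phi : nat -> nat) : (forall k, (phi k < phi (S k))%nat) -> forall k, (k <= phi k)%nat.
Proof.
move=> h; elim=> [|k IH] //. exact: leq_ltn_trans IH (h k).
Qed.

Lemma Un_cv_sub (u : nat -> R) l (phi : nat -> nat) :
  (forall k, (phi k < phi (S k))%nat) -> Un_cv u l -> Un_cv (fun k => u (phi k)) l.
Proof.
move=> hphi hu eps heps. have [N HN] := hu eps heps. exists N => n hn.
apply: HN. have h1 := @incr_ge phi hphi n. have h2 : leq N n by apply/leP. apply/leP. exact: leq_trans h2 h1.
Qed.

Lemma incr_comp (phi psi : nat -> nat) : (forall k, (phi k < phi (S k))%nat) ->
  (forall k, (psi k < psi (S k))%nat) -> forall k, (phi (psi k) < phi (psi (S k)))%nat.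
Proof.
move=> hphi hpsi.
have mono : forall a b, (a < b)%nat -> (phi a < phi b)%nat.
  move=> a b; elim: b => [//|b IH]. rewrite ltnS leq_eqVlt => /orP [/eqP -> | hab].
    exact: hphi.
  exact: ltn_trans (IH hab) (hphi b).
move=> k; apply: mono; exact: hpsi.
Qed.

Lemma BWd (d : nat) (s : nat -> vec d) (M : R) : (forall k i, Rabs (s k i) <= M) ->
  exists phi : nat -> nat, exists l : vec d, (forall k, (phi k < phi (S k))%nat) /\
    forall i, Un_cv (fun k => s (phi k) i) (l i).
Proof.
move=> hM.
have H : forall r : seq 'I_d, exists phi : nat -> nat, (forall k, (phi k < phi (S k))%nat) /\
   forall i, i \in r -> exists li, Un_cv (fun k => s (phi k) i) li.
  elim=> [|i r [phi [hphi hr]]].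
    by exists (fun k : nat => k); split => // k; rewrite ltnSn.
  have [psi [hpsi [li hli]]] := BW1 (fun k => s (phi k) i) M (fun k => hM _ _).
  exists (fun k => phi (psi k)); split; first exact: incr_comp.
  move=> j; rewrite in_cons => /orP [/eqP -> | hj]; first by exists li.
  have [lj hlj] := hr j hj. exists lj.
  exact: (Un_cv_sub (fun k => s (phi k) j) lj psi hpsi hlj).
have [phi [hphi hall]] := H (enum 'I_d).
pose l := fun i => myeps (0) (fun li => Un_cv (fun k => s (phi k) i) li).
exists phi, l; split => // i.
apply: (myeps_spec (0) (fun li => Un_cv (fun k => s (phi k) i) li)).
apply: hall. by rewrite mem_enum.
Qed.

Lemma CV_const c : Un_cv (fun _ => c) c.
Proof. move=> eps heps; exists 0%nat => n _; rewrite /R_dist Rminus_diag Rabs_R0; lra. Qed.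

Lemma CV_big (J : Type) (r : seq J) (F : nat -> J -> R) (G : J -> R) :
  (forall j, Un_cv (fun k => F k j) (G j)) ->
  Un_cv (fun k => \big[Rplus/0]_(j <- r) F k j) (\big[Rplus/0]_(j <- r) G j).
Proof.
move=> h; elim: r => [|j r IH].
  rewrite big_nil. under eq_fun do rewrite big_nil. exact: CV_const.
rewrite big_cons. under eq_fun do rewrite big_cons. exact: CV_plus.
Qed.

Section HBsec.
Variable I : finType.
Definition gadd (a b : I -> R) : I -> R := fun i => a i + b i.
Definition gsc (r : R) (a : I -> R) : I -> R := fun i => r * a i.
Definition gz : I -> R := fun _ => 0.
Definition ginner (w z : I -> R) : R := \big[Rplus/0]_(i : I) (w i * z i).
Definition subsp (M : (I -> R) -> Prop) : Prop :=
  M gz /\ (forall a b, M a -> M b -> M (gadd a b)) /\ (forall r a, M a -> M (gsc r a)).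
Definition linon (M : (I -> R) -> Prop) (f : (I -> R) -> R) : Prop :=
  (forall a b, M a -> M b -> f (gadd a b) = f a + f b) /\
  (forall r a, M a -> f (gsc r a) = r * f a).

Variable p : (I -> R) -> R.
Hypothesis psub : forall a b, p (gadd a b) <= p a + p b.
Hypothesis phom : forall r a, 0 < r -> p (gsc r a) = r * p a.

Definition extends (M : (I -> R) -> Prop) f M' f' :=
  subsp M' /\ linon M' f' /\ (forall z, M' z -> f' z <= p z) /\
  (forall z, M z -> M' z /\ f' z = f z).

Lemma linon0 M f : subsp M -> linon M f -> f gz = 0.
Proof.
move=> [h0 _] [_ hs]. have := hs 0 gz h0.
have -> : gsc 0 gz = gz by apply: functional_extensionality => i; rewrite /gsc /gz; ring.
lra.
Qed.

Lemma HB_step M f x : subsp M -> linon M f -> (forall z, M z -> f z <= p z) ->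
  exists M' f', extends M f M' f' /\ M' x.
Proof.
move=> hM hf hp.
case: (classic (M x)) => hx.
  exists M, f; split => //; split => //; split => //; split => //.
have [hM0 [hMa hMs]] := hM. have [hfa hfs] := hf.
have f0 := @linon0 M f hM hf.
pose A r := exists m, M m /\ r = f m - p (gadd m (gsc (-1) x)).
have key0 : forall m1 m2, M m1 -> M m2 ->
    f m1 - p (gadd m1 (gsc (-1) x)) <= p (gadd m2 x) - f m2.
  move=> m1 m2 h1 h2.
  have e : gadd (gadd m1 (gsc (-1) x)) (gadd m2 x) = gadd m1 m2.
    by apply: functional_extensionality => i; rewrite /gadd /gsc; ring.
  have := psub (gadd m1 (gsc (-1) x)) (gadd m2 x). rewrite e.
  have := hp _ (hMa _ _ h1 h2). rewrite hfa //. lra.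
have [c [hc1 hc2]] : exists c, (forall a, A a -> a <= c) /\
    (forall b, (forall a, A a -> a <= b) -> c <= b).
  apply: sup_ex.
    by exists (f gz - p (gadd gz (gsc (-1) x))), gz.
  exists (p (gadd gz x) - f gz) => a [m [hm ->]]. exact: key0.
have hc1' : forall m, M m -> f m - p (gadd m (gsc (-1) x)) <= c.
  move=> m hm; apply: hc1; by exists m.
have hc2' : forall m, M m -> c <= p (gadd m x) - f m.
  move=> m hm; apply: hc2 => a [m1 [hm1 ->]]. exact: key0.
pose M' z := exists m t, M m /\ z = gadd m (gsc t x).
have uniq : forall m1 m2 t1 t2, M m1 -> M m2 -> gadd m1 (gsc t1 x) = gadd m2 (gsc t2 x) ->
    t1 = t2 /\ m1 = m2.
  move=> m1 m2 t1 t2 h1 h2 e.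
  have ei : forall i, m1 i + t1 * x i = m2 i + t2 * x i.
    move=> i. have := congr1 (fun g => g i) e. by rewrite /gadd /gsc.
  case: (Req_dec t1 t2) => ht.
    split => //. apply: functional_extensionality => i. have := ei i. rewrite ht. lra.
  exfalso; apply: hx.
  have ex : x = gsc (/ (t1 - t2)) (gadd m2 (gsc (-1) m1)).
    apply: functional_extensionality => i. rewrite /gsc /gadd. have := ei i.
    move=> h. have ht' : t1 - t2 <> 0 by lra.
    field_simplify_eq => //. lra.
  rewrite ex. apply: (proj2 (proj2 hM)). apply: (proj1 (proj2 hM)) => //. exact: (proj2 (proj2 hM)).
pose f' z := let mt := myeps ((gz, 0)) (fun mt => M mt.1 /\ z = gadd mt.1 (gsc mt.2 x)) in
   f mt.1 + mt.2 * c.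
have key : forall m t, M m -> f' (gadd m (gsc t x)) = f m + t * c.
  move=> m t hm. rewrite /f'.
  have := myeps_spec ((gz, 0))
     (fun mt => M mt.1 /\ gadd m (gsc t x) = gadd mt.1 (gsc mt.2 x)) (ex_intro _ (m, t) (conj hm erefl)).
  case: (myeps _ _) => m1 t1 /= [hm1 e].
  have [-> ->] := uniq _ _ _ _ hm hm1 e. done.
exists M', f'; split; last first.
  exists gz, 1; split => //. apply: functional_extensionality => i; rewrite /gadd /gsc /gz; ring.
split; [|split; [|split]].
- split; [|split].
  + exists gz, 0; split => //. apply: functional_extensionality => i; rewrite /gadd /gsc /gz; ring.
  + move=> a b [m1 [t1 [h1 ->]]] [m2 [t2 [h2 ->]]]. exists (gadd m1 m2), (t1 + t2); split; first exact: hMa.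
    apply: functional_extensionality => i; rewrite /gadd /gsc; ring.
  + move=> r a [m1 [t1 [h1 ->]]]. exists (gsc r m1), (r * t1); split; first exact: hMs.
    apply: functional_extensionality => i; rewrite /gadd /gsc; ring.
- split.
  + move=> a b [m1 [t1 [h1 ->]]] [m2 [t2 [h2 ->]]].
    have -> : gadd (gadd m1 (gsc t1 x)) (gadd m2 (gsc t2 x)) = gadd (gadd m1 m2) (gsc (t1 + t2) x).
      apply: functional_extensionality => i; rewrite /gadd /gsc; ring.
    rewrite !key //; last exact: hMa. rewrite hfa //. ring.
  + move=> r a [m1 [t1 [h1 ->]]].
    have -> : gsc r (gadd m1 (gsc t1 x)) = gadd (gsc r m1) (gsc (r * t1) x).
      apply: functional_extensionality => i; rewrite /gadd /gsc; ring.
    rewrite !key //; last exact: hMs. rewrite hfs //. ring.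
- move=> z [m [t [hm ->]]]. rewrite key //.
  case: (Rtotal_order t 0) => [ht | [ht | ht]].
  + pose s := - t. have hs : 0 < s by rewrite /s; lra.
    pose m' := gsc (/ s) m.
    have hm' : M m' by apply: hMs.
    have := hc1' _ hm'.
    have e1 : gadd m (gsc t x) = gsc s (gadd m' (gsc (-1) x)).
      apply: functional_extensionality => i; rewrite /m' /gadd /gsc /s. field. lra.
    have e2 : f m = s * f m'.
      rewrite /m' hfs //. field. lra.
    rewrite e1 phom // e2. rewrite /s. nra.
  + rewrite ht.
    have -> : gadd m (gsc 0 x) = m by apply: functional_extensionality => i; rewrite /gadd /gsc; ring.
    have := hp _ hm. lra.
  + pose m' := gsc (/ t) m.
    have hm' : M m' by apply: hMs.
    have := hc2' _ hm'.
    have e1 : gadd m (gsc t x) = gsc t (gadd m' x).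
      apply: functional_extensionality => i; rewrite /m' /gadd /gsc. field. lra.
    have e2 : f m = t * f m'.
      rewrite /m' hfs //. field. lra.
    rewrite e1 phom // e2. nra.
- move=> z hz. split.
    exists z, 0; split => //. apply: functional_extensionality => i; rewrite /gadd /gsc; ring.
  have e : z = gadd z (gsc 0 x) by apply: functional_extensionality => i; rewrite /gadd /gsc; ring.
  rewrite {1}e key //. ring.
Qed.

Definition unitv (i : I) : I -> R := fun j => if j == i then 1 else 0.

Lemma extends_trans M f M1 f1 M2 f2 : extends M f M1 f1 -> extends M1 f1 M2 f2 -> extends M f M2 f2.
Proof.
move=> [_ [_ [_ h1]]] [s2 [l2 [b2 h2]]]; split => //; split => //; split => //.
move=> z hz. have [hz1 e1] := h1 z hz. have [hz2 e2] := h2 z hz1. split => //. by rewrite e2.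
Qed.

Lemma HB_iter (r : seq I) : forall M f, subsp M -> linon M f -> (forall z, M z -> f z <= p z) ->
  exists M' f', extends M f M' f' /\ forall i, i \in r -> M' (unitv i).
Proof.
elim: r => [|i r IH] M f hM hf hp.
  exists M, f; split => //; split => //; split => //; split => //.
have [M1 [f1 [hext1 hx1]]] := @HB_step M f (unitv i) hM hf hp.
have [hM1 [hf1 [hp1 _]]] := hext1.
have [M2 [f2 [hext2 hr2]]] := IH M1 f1 hM1 hf1 hp1.
exists M2, f2; split; first exact: (@extends_trans _ _ _ _ _ _ hext1 hext2).
move=> j; rewrite in_cons => /orP [/eqP -> | hj]; last exact: hr2.
have [_ [_ [_ h]]] := hext2. exact: (proj1 (h _ hx1)).
Qed.

Theorem HB M f : subsp M -> linon M f -> (forall z, M z -> f z <= p z) ->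
  exists w : I -> R, (forall z, ginner w z <= p z) /\ (forall z, M z -> ginner w z = f z).
Proof.
move=> hM hf hp.
have [M' [f' [[hM' [hf' [hp' hext]]] hall]]] := @HB_iter (index_enum I) M f hM hf hp.
pose w i := f' (unitv i).
have dec : forall (r : seq I) z, (forall i, i \in r -> M' (unitv i)) ->
    M' (fun j => \big[Rplus/0]_(i <- r) (z i * unitv i j)) /\ 
    f' (fun j => \big[Rplus/0]_(i <- r) (z i * unitv i j)) = \big[Rplus/0]_(i <- r) (w i * z i).
  move=> r z; elim: r => [|a r IH] hr.
    have e : (fun j => \big[Rplus/0]_(i <- [::]) (z i * unitv i j)) = gz.
      apply: functional_extensionality => j. by rewrite big_nil.
    rewrite e big_nil. split; first exact: (proj1 hM'). exact: (@linon0 M' f' hM' hf').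
  have e : (fun j => \big[Rplus/0]_(i <- a :: r) (z i * unitv i j)) =
      gadd (gsc (z a) (unitv a)) (fun j => \big[Rplus/0]_(i <- r) (z i * unitv i j)).
    apply: functional_extensionality => j. by rewrite big_cons.
  have ha : M' (unitv a) by apply: hr; rewrite in_cons eqxx.
  have [h1 h2] := IH (fun i hi => hr i ltac:(by rewrite in_cons hi orbT)).
  have [hMa hMs] := (proj2 hM').
  rewrite e big_cons. split; first by apply: hMa => //; apply: hMs.
  rewrite (proj1 hf') //; last exact: hMs. rewrite (proj2 hf') // h2 /w. ring.
have zdec : forall z : I -> R, z = (fun j => \big[Rplus/0]_(i <- index_enum I) (z i * unitv i j)).
  move=> z; apply: functional_extensionality => j.
  rewrite (bigD1 j) //= /unitv eqxx big1 /=; first ring.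
  move=> i hi. rewrite eq_sym (negbTE hi). ring.
have key : forall z, M' z /\ f' z = ginner w z.
  move=> z. rewrite {1 2}(zdec z). have [h1 h2] := dec (index_enum I) z hall. split => //.
exists w; split.
  move=> z. have [h1 h2] := key z. rewrite -h2. exact: hp'.
move=> z hz. have [h1 h2] := key z. rewrite -h2. exact: (proj2 (hext z hz)).
Qed.
End HBsec.

Set Implicit Arguments. Unset Strict Implicit.
Arguments unitv {I} i j.
Section Vec.
Variable n : nat.
Implicit Types a b z x y : vec n.

Lemma veqE a b : veq a b -> a = b.
Proof. move=> h; exact: functional_extensionality. Qed.

Lemma inner_sym a b : inner a b = inner b a.
Proof. rewrite /inner; apply: eq_bigr => i _; ring. Qed.

Lemma inner_addl a b z : inner (vadd a b) z = inner a z + inner b z.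
Proof. rewrite /inner -big_split /=; apply: eq_bigr => i _; rewrite /vadd; ring. Qed.

Lemma inner_addr a b z : inner z (vadd a b) = inner z a + inner z b.
Proof. by rewrite inner_sym inner_addl !(inner_sym z). Qed.

Lemma inner_scl r a z : inner (vscale r a) z = r * inner a z.
Proof. rewrite /inner big_distrr /=; apply: eq_bigr => i _; rewrite /vscale; ring. Qed.

Lemma inner_sclr r a z : inner z (vscale r a) = r * inner z a.
Proof. by rewrite inner_sym inner_scl inner_sym. Qed.

Lemma inner_oppl a z : inner (vopp a) z = - inner a z.
Proof.
have -> : vopp a = vscale (-1) a by apply: veqE => i; rewrite /vopp /vscale; ring.
rewrite inner_scl; ring.
Qed.

Lemma inner_oppr a z : inner z (vopp a) = - inner z a.
Proof. by rewrite inner_sym inner_oppl inner_sym. Qed.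

Lemma inner_subl a b z : inner (vsub a b) z = inner a z - inner b z.
Proof.
have -> : vsub a b = vadd a (vopp b) by apply: veqE => i; rewrite /vsub /vadd /vopp; ring.
rewrite inner_addl inner_oppl; ring.
Qed.

Lemma inner_subr a b z : inner z (vsub a b) = inner z a - inner z b.
Proof. by rewrite inner_sym inner_subl !(inner_sym z). Qed.

Lemma inner_0l z : inner vzero z = 0.
Proof. rewrite /inner big1 // => i _; rewrite /vzero; ring. Qed.

Lemma inner_ge0 z : 0 <= inner z z.
Proof.
rewrite /inner. elim/big_rec: _ => [|i x _ hx]; first lra.
have := Rle_0_sqr (z i). rewrite /Rsqr. lra.
Qed.

Lemma inner_unit (i : 'I_n) : inner (unitv i) (unitv i) = 1.
Proof.
rewrite /inner (bigD1 i) //= /unitv eqxx big1 /=; first ring.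
move=> j hj. rewrite (negbTE hj). ring.
Qed.

Lemma vdec z : z = (fun j => \big[Rplus/0]_(i <- index_enum 'I_n) (z i * unitv i j)).
Proof.
apply: functional_extensionality => j.
rewrite (bigD1 j) //= /unitv eqxx big1 /=; first ring.
move=> i hi. rewrite eq_sym (negbTE hi). ring.
Qed.

Lemma Rabs_big (r : seq 'I_n) (F : 'I_n -> R) :
  Rabs (\big[Rplus/0]_(i <- r) F i) <= \big[Rplus/0]_(i <- r) Rabs (F i).
Proof.
elim: r => [|a r IH]; first by rewrite !big_nil Rabs_R0; lra.
rewrite !big_cons. have := Rabs_triang (F a) (\big[Rplus/0]_(i <- r) F i). lra.
Qed.

End Vec.

Section Norm.
Variable n : nat.
Variable N : vec n -> R.
Hypothesis hN : IsNorm N.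

Lemma Nvz : N vzero = 0.
Proof. apply: (proj2 (norm_def N hN vzero)) => i; reflexivity. Qed.

Lemma Nscale r x : N (vscale r x) = Rabs r * N x.
Proof. exact: (norm_hom N hN). Qed.

Lemma Ntri x y : N (vadd x y) <= N x + N y.
Proof. exact: (norm_tri N hN). Qed.

Lemma Nopp x : N (vopp x) = N x.
Proof.
have -> : vopp x = vscale (-1) x by apply: veqE => i; rewrite /vopp /vscale; ring.
rewrite Nscale Rabs_Ropp Rabs_R1; ring.
Qed.

Lemma Nge0 x : 0 <= N x.
Proof.
have := Ntri x (vopp x).
have -> : vadd x (vopp x) = vzero by apply: veqE => i; rewrite /vadd /vopp /vzero; ring.
rewrite Nvz Nopp. lra.
Qed.

Lemma Nsub x y : N x - N y <= N (vsub x y).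
Proof.
have := Ntri (vsub x y) y.
have -> : vadd (vsub x y) y = x by apply: veqE => i; rewrite /vadd /vsub; ring.
lra.
Qed.

Lemma Nzero x : N x = 0 -> x = vzero.
Proof. move=> h; apply: veqE; exact: (proj1 (norm_def N hN x) h). Qed.

Lemma N_big (r : seq 'I_n) (x : vec n) :
  N (fun j => \big[Rplus/0]_(i <- r) (x i * unitv i j)) <= \big[Rplus/0]_(i <- r) (Rabs (x i) * N (unitv i)).
Proof.
elim: r => [|a r IH].
  have -> : (fun j => \big[Rplus/0]_(i <- [::]) (x i * unitv i j)) = vzero.
    apply: functional_extensionality => j. by rewrite big_nil.
  rewrite Nvz big_nil; lra.
have -> : (fun j => \big[Rplus/0]_(i <- a :: r) (x i * unitv i j)) =
   vadd (vscale (x a) (unitv a)) (fun j => \big[Rplus/0]_(i <- r) (x i * unitv i j)).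
  apply: functional_extensionality => j. by rewrite big_cons.
rewrite big_cons. have := Ntri (vscale (x a) (unitv a)) (fun j => \big[Rplus/0]_(i <- r) (x i * unitv i j)).
rewrite Nscale. lra.
Qed.

Lemma N_bound x : N x <= \big[Rplus/0]_(i <- index_enum 'I_n) (Rabs (x i) * N (unitv i)).
Proof. rewrite {1}(vdec x). exact: N_big. Qed.

Lemma Ncont (s : nat -> vec n) (l : vec n) :
  (forall i, Un_cv (fun k => s k i) (l i)) -> Un_cv (fun k => N (s k)) (N l).
Proof.
move=> hs.
have hg : Un_cv (fun k => \big[Rplus/0]_(i <- index_enum 'I_n) (Rabs (vsub (s k) l i) * N (unitv i)))
   (\big[Rplus/0]_(i <- index_enum 'I_n) (0 * N (unitv i))).
  apply: CV_big => i. apply: CV_mult; last exact: CV_const.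
  move=> eps heps. have [M hM] := hs i eps heps. exists M => k hk.
  have := hM k hk. rewrite /R_dist /vsub Rminus_0_r Rabs_Rabsolu. done.
rewrite big1 in hg; last by move=> i _; ring.
move=> eps heps. have [M hM] := hg eps heps. exists M => k hk.
have := hM k hk. rewrite /R_dist Rminus_0_r => h1.
have h2 := N_bound (vsub (s k) l).
have h3 := Nsub (s k) l.
have h4 : N l - N (s k) <= N (vsub (s k) l).
  have := Nsub l (s k).
  have -> : vsub l (s k) = vopp (vsub (s k) l) by apply: veqE => i; rewrite /vsub /vopp; ring.
  by rewrite Nopp.
have h5 := Rle_abs (\big[Rplus/0]_(i <- index_enum 'I_n) (Rabs (vsub (s k) l i) * N (unitv i))).
rewrite /R_dist. apply: Rabs_def1; lra.
Qed.

End Norm.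

Section Cone.
Variables (n : nat) (K : vec n -> Prop) (e : vec n) (eps : R).
Hypotheses (hK0 : K vzero) (hKadd : forall x y, K x -> K y -> K (vadd x y))
  (hKsc : forall a x, 0 <= a -> K x -> K (vscale a x)) (hpt : is_pointed K)
  (heps : 0 < eps) (hball : forall y, inner (vsub y e) (vsub y e) < eps * eps -> K y)
  (i0 : 'I_n).

Lemma eK : K e.
Proof.
apply: hball. have -> : vsub e e = vzero by apply: veqE => i; rewrite /vsub /vzero; ring.
rewrite inner_0l. nra.
Qed.

Lemma notneg t : 0 < t -> ~ K (vscale (- t) e).
Proof.
move=> ht hk.
have hme : K (vopp e).
  have -> : vopp e = vscale (/ t) (vscale (- t) e).
    apply: veqE => i; rewrite /vopp /vscale. field. lra.
  apply: hKsc => //. apply: Rlt_le. exact: Rinv_0_lt_compat.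
have e0 : e = vzero by apply: veqE; exact: hpt eK hme.
pose y := vscale (eps / 2) (unitv i0).
have hy : forall c, c * c = 1 -> K (vscale c y).
  move=> c hc. apply: hball. rewrite e0.
  have -> : vsub (vscale c y) vzero = vscale (c * (eps/2)) (unitv i0).
    apply: veqE => i; rewrite /y /vsub /vscale /vzero. ring.
  rewrite inner_scl inner_sclr inner_unit.
  have -> : c * (eps / 2) * (c * (eps / 2) * 1) = (c * c) * (eps * eps) / 4 by field.
  rewrite hc. nra.
have h1 : K (vscale 1 y) by apply: hy; ring.
have h2 : K (vscale (-1) y) by apply: hy; ring.
have h2' : K (vopp (vscale 1 y)).
  have -> : vopp (vscale 1 y) = vscale (-1) y by apply: veqE => i; rewrite /vopp /vscale; ring.
  exact: h2.
have := hpt h1 h2' i0. rewrite /y /vscale /unitv /vzero eqxx. lra.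
Qed.

Lemma absorb z : K (vsub (vscale ((inner z z + 1) / eps) e) z).
Proof.
set Q := inner z z. have hQ : 0 <= Q by apply: inner_ge0.
set t := (Q + 1) / eps.
have ht : 0 < t by rewrite /t; apply: Rdiv_lt_0_compat; lra.
set a := eps / (Q + 1).
have ha : 0 < a by rewrite /a; apply: Rdiv_lt_0_compat; lra.
have hae : a * (Q + 1) = eps by rewrite /a; field; lra.
have hy : K (vsub e (vscale (/ t) z)).
  apply: hball.
  have -> : vsub (vsub e (vscale (/ t) z)) e = vscale (- a) z.
    apply: veqE => i; rewrite /vsub /vscale /t /a. field. lra.
  rewrite inner_scl inner_sclr -/Q. rewrite -hae. nra.
have -> : vsub (vscale t e) z = vscale t (vsub e (vscale (/ t) z)).
  apply: veqE => i; rewrite /vsub /vscale. field. lra.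
apply: hKsc => //. lra.
Qed.

Lemma tbound z t : K (vsub z (vscale t e)) -> t <= (inner z z + 1) / eps.
Proof.
move=> hk. set s := (inner z z + 1) / eps.
case: (Rle_lt_dec t s) => // hts. exfalso.
have := hKadd hk (absorb z).
have -> : vadd (vsub z (vscale t e)) (vsub (vscale ((inner z z + 1) / eps) e) z) = vscale (- (t - s)) e.
  apply: veqE => i; rewrite /vadd /vsub /vscale /s. ring.
apply: notneg. lra.
Qed.

Definition feas z t := K (vsub (vscale t e) z).

Definition mu z := myeps (0) (fun s => (forall t, feas z t -> s <= t) /\
    (forall b, (forall t, feas z t -> b <= t) -> b <= s)).

Lemma mu_spec z : (forall t, feas z t -> mu z <= t) /\
    (forall b, (forall t, feas z t -> b <= t) -> b <= mu z).
Proof.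
apply: (myeps_spec (0) (fun s => (forall t, feas z t -> s <= t) /\
    (forall b, (forall t, feas z t -> b <= t) -> b <= s))).
apply: inf_ex.
  exists ((inner z z + 1) / eps). exact: absorb.
exists (- ((inner (vopp z) (vopp z) + 1) / eps)) => t ht.
have : t * -1 <= (inner (vopp z) (vopp z) + 1) / eps.
  apply: tbound. rewrite /feas in ht.
  have -> : vsub (vopp z) (vscale (t * -1) e) = vsub (vscale t e) z.
    apply: veqE => i; rewrite /vsub /vopp /vscale; ring.
  done.
lra.
Qed.

Lemma mu_lb z t : feas z t -> mu z <= t.
Proof. exact: (proj1 (mu_spec z)). Qed.

Lemma mu_glb z b : (forall t, feas z t -> b <= t) -> b <= mu z.
Proof. exact: (proj2 (mu_spec z)). Qed.

Lemma mu_sub a b : mu (vadd a b) <= mu a + mu b.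
Proof.
suff : mu (vadd a b) - mu b <= mu a by lra.
apply: mu_glb => ta hta.
suff : mu (vadd a b) - ta <= mu b by lra.
apply: mu_glb => tb htb.
suff : mu (vadd a b) <= ta + tb by lra.
apply: mu_lb. rewrite /feas.
have -> : vsub (vscale (ta + tb) e) (vadd a b) = vadd (vsub (vscale ta e) a) (vsub (vscale tb e) b).
  apply: veqE => i; rewrite /vsub /vadd /vscale; ring.
exact: hKadd.
Qed.

Lemma mu_hom r a : 0 < r -> mu (vscale r a) = r * mu a.
Proof.
move=> hr. apply: Rle_antisym.
  suff : mu (vscale r a) / r <= mu a.
    move=> h. have := Rmult_le_compat_l r _ _ (Rlt_le _ _ hr) h.
    have -> : r * (mu (vscale r a) / r) = mu (vscale r a) by field; lra. done.
  apply: mu_glb => t ht.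
  have : mu (vscale r a) <= r * t.
    apply: mu_lb. rewrite /feas.
    have -> : vsub (vscale (r * t) e) (vscale r a) = vscale r (vsub (vscale t e) a).
      apply: veqE => i; rewrite /vsub /vscale; ring.
    apply: hKsc => //. lra.
  move=> h. have -> : t = (r * t) / r by field; lra.
  apply: Rmult_le_compat_r => //. apply: Rlt_le. exact: Rinv_0_lt_compat.
apply: mu_glb => t ht.
have : mu a <= t / r.
  apply: mu_lb. rewrite /feas.
  have -> : vsub (vscale (t / r) e) a = vscale (/ r) (vsub (vscale t e) (vscale r a)).
    apply: veqE => i; rewrite /vsub /vscale. field. lra.
  apply: hKsc => //. apply: Rlt_le. exact: Rinv_0_lt_compat.
move=> h. have := Rmult_le_compat_l r _ _ (Rlt_le _ _ hr) h.
have -> : r * (t / r) = t by field; lra. done.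
Qed.

Lemma mu_oppK k : K k -> mu (vopp k) <= 0.
Proof.
move=> hk; apply: mu_lb; rewrite /feas.
have -> : vsub (vscale 0 e) (vopp k) = k by apply: veqE => i; rewrite /vsub /vscale /vopp; ring.
done.
Qed.

Lemma mu_e : mu e <= 1.
Proof.
apply: mu_lb; rewrite /feas.
have -> : vsub (vscale 1 e) e = vzero by apply: veqE => i; rewrite /vsub /vscale /vzero; ring.
done.
Qed.

Lemma mu_me : mu (vopp e) <= -1.
Proof.
apply: mu_lb; rewrite /feas.
have -> : vsub (vscale (-1) e) (vopp e) = vzero by apply: veqE => i; rewrite /vsub /vscale /vopp /vzero; ring.
done.
Qed.

Lemma mu_0 : mu vzero <= 0.
Proof.
apply: mu_lb; rewrite /feas.
have -> : vsub (vscale 0 e) vzero = vzero by apply: veqE => i; rewrite /vsub /vscale /vzero; ring.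
done.
Qed.

End Cone.

Lemma Rle_big (J : Type) (r : seq J) (F G : J -> R) :
  (forall j, F j <= G j) -> \big[Rplus/0]_(j <- r) F j <= \big[Rplus/0]_(j <- r) G j.
Proof.
move=> h; elim: r => [|a r IH]; first by rewrite !big_nil; lra.
rewrite !big_cons. have := h a. lra.
Qed.

Lemma big_ge0 (J : Type) (r : seq J) (F : J -> R) :
  (forall j, 0 <= F j) -> 0 <= \big[Rplus/0]_(j <- r) F j.
Proof.
move=> h; elim: r => [|a r IH]; first by rewrite !big_nil; lra.
rewrite !big_cons. have := h a. lra.
Qed.

Lemma sq_le (m : nat) (c : vec m) j : c j * c j <= inner c c.
Proof.
rewrite /inner (bigD1 j) //=.
have : 0 <= \big[Rplus/0]_(i < m | i != j) (c i * c i).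
  rewrite big_mkcond /=. apply: big_ge0 => i. case: (i != j); last lra.
  have := Rle_0_sqr (c i). rewrite /Rsqr. lra.
move=> h. rewrite -{1}(Rplus_0_r (c j * c j)). apply: Rplus_le_compat_l. exact: h.
Qed.

Lemma abs_le_sq (x s : R) : 0 <= s -> x * x <= s * s -> Rabs x <= s.
Proof.
move=> hs h. case: (Rcase_abs x) => hx.
  rewrite Rabs_left //. nra.
rewrite Rabs_right //. nra.
Qed.

Lemma inv_cv0 (phi : nat -> nat) : (forall k, (phi k < phi (S k))%nat) ->
  forall eps, 0 < eps -> exists N0, forall k, (k >= N0)%coq_nat -> / INR (S (phi k)) < eps.
Proof.
move=> hphi eps heps. have [N0 [h1 h2]] := archimed_cor1 eps heps.
exists N0 => k hk.
have hk' : (N0 <= S (phi k))%coq_nat.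
  apply/leP. have := @incr_ge phi hphi k. move/leP: hk => hk. move=> h. apply: leq_trans (leqnSn _).
  exact: leq_trans hk h.
have hN0 : 0 < INR N0 by apply: lt_0_INR; exact: h2.
apply: Rle_lt_trans h1. apply: Rinv_le_contravar => //. exact: le_INR.
Qed.

Section Main.
Variables (n m : nat) (N : vec n -> R) (K : vec n -> Prop) (e : vec n) (eps : R)
  (i0 : 'I_n) (b : 'I_m -> vec n).
Hypotheses (hN : IsNorm N) (hK0 : K vzero) (hKadd : forall x y, K x -> K y -> K (vadd x y))
  (hKsc : forall a x, 0 <= a -> K x -> K (vscale a x)) (hpt : is_pointed K) (hcl : is_closed K)
  (heps : 0 < eps) (hball : forall y, inner (vsub y e) (vsub y e) < eps * eps -> K y)
  (hb : lin_indep b).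

Lemma lc_add c1 c2 : lincomb (fun j => c1 j + c2 j) b = vadd (lincomb c1 b) (lincomb c2 b).
Proof.
apply: functional_extensionality => i; rewrite /lincomb /vadd -big_split /=.
apply: eq_bigr => j _; ring.
Qed.

Lemma lc_scale r c : lincomb (fun j => r * c j) b = vscale r (lincomb c b).
Proof.
apply: functional_extensionality => i; rewrite /lincomb /vscale big_distrr /=.
apply: eq_bigr => j _; ring.
Qed.

Lemma lc_zero : lincomb (fun _ => 0) b = vzero.
Proof.
apply: functional_extensionality => i; rewrite /lincomb /vzero big1 // => j _; ring.
Qed.

Lemma lc_opp c : lincomb (fun j => - c j) b = vopp (lincomb c b).
Proof.
have -> : (fun j => - c j) = (fun j => -1 * c j) by apply: functional_extensionality => j; ring.
rewrite lc_scale; apply: functional_extensionality => i; rewrite /vscale /vopp; ring.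
Qed.

Lemma lc_cv (cs : nat -> vec m) (l : vec m) : (forall j, Un_cv (fun k => cs k j) (l j)) ->
  forall i, Un_cv (fun k => lincomb (cs k) b i) (lincomb l b i).
Proof.
move=> h i. rewrite /lincomb. apply: CV_big => j. apply: CV_mult => //. exact: CV_const.
Qed.

Lemma coef_bound : exists al, 0 < al /\ forall c j, al * Rabs (c j) <= N (lincomb c b).
Proof.
have [al [hal H]] : exists al, 0 < al /\ forall c, inner c c = 1 -> al <= N (lincomb c b).
  apply: NNPP => hno.
  have hseq : forall k : nat, exists c, inner c c = 1 /\ N (lincomb c b) < / INR (S k).
    move=> k. apply: NNPP => h. apply: hno. exists (/ INR (S k)). split.
      apply: Rinv_0_lt_compat. apply: lt_0_INR. apply/ssrnat.ltP. done.
    move=> c hc. apply: Rnot_lt_le => hlt. apply: h. by exists c.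
  pose cs k := myeps ((fun _ : 'I_m => 0))
     (fun c => inner c c = 1 /\ N (lincomb c b) < / INR (S k)).
  have hcs : forall k, inner (cs k) (cs k) = 1 /\ N (lincomb (cs k) b) < / INR (S k).
    move=> k. exact: (myeps_spec _ (fun c => inner c c = 1 /\ N (lincomb c b) < / INR (S k)) (hseq k)).
  have hbd : forall k j, Rabs (cs k j) <= 1.
    move=> k j. apply: abs_le_sq; first lra. rewrite Rmult_1_r. rewrite -(proj1 (hcs k)). exact: sq_le.
  have [phi [cst [hphi hcv]]] := BWd m cs 1 hbd.
  have hin := CV_big _ (index_enum 'I_m) _ _ (fun j => CV_mult _ _ _ _ (hcv j) (hcv j)).
  have e1 : (fun k => \big[Rplus/0]_(j <- index_enum 'I_m) (cs (phi k) j * cs (phi k) j)) = (fun _ => 1).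
    apply: functional_extensionality => k. exact: (proj1 (hcs (phi k))).
  rewrite e1 in hin.
  have hin1 : inner cst cst = 1 := UL_sequence _ _ _ hin (CV_const 1).
  have hN1 := Ncont hN (lc_cv hcv).
  have hN2 : Un_cv (fun k => N (lincomb (cs (phi k)) b)) 0.
    move=> eps' heps'. have [N0 HN0] := inv_cv0 hphi heps'. exists N0 => k hk.
    have := HN0 k hk. have := proj2 (hcs (phi k)). have := Nge0 hN (lincomb (cs (phi k)) b).
    rewrite /R_dist Rminus_0_r. move=> h0 h1 h2. rewrite Rabs_right; lra.
  have h0 := UL_sequence _ _ _ hN1 hN2.
  have hz := Nzero hN h0.
  have hc0 : forall j, cst j = 0 by apply: hb => i; rewrite hz.
  move: hin1. rewrite /inner big1 //; first lra. move=> j _; rewrite hc0; ring.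
exists al; split => // c j.
case: (Req_dec (inner c c) 0) => hQ.
  have hcj : c j = 0.
    have := sq_le c j. rewrite hQ. move=> h. have := Rle_0_sqr (c j). rewrite /Rsqr. nra.
  rewrite hcj Rabs_R0 Rmult_0_r. exact: Nge0.
have hQ0 : 0 < inner c c by have := inner_ge0 c; lra.
pose s := sqrt (inner c c).
have hs : 0 < s by apply: sqrt_lt_R0.
have hss : s * s = inner c c by apply: sqrt_sqrt; lra.
pose c' := fun j => / s * c j.
have hc' : inner c' c' = 1.
  rewrite /c' inner_scl inner_sclr -hss. field. lra.
have hlc : lincomb c b = vscale s (lincomb c' b).
  rewrite -lc_scale /c'. congr lincomb. apply: functional_extensionality => k. field. lra.
have hRs : Rabs s = s by apply: Rabs_right; lra.
rewrite hlc Nscale // hRs.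
have := H _ hc'.
have hcj : Rabs (c j) <= s by apply: abs_le_sq; [lra | rewrite hss; exact: sq_le].
have := Rabs_pos (c j). nra.
Qed.

Lemma x0_exists : exists v x0, (exists c, x0 = lincomb c b) /\ N x0 <= 1 /\ K (vsub x0 (vscale v e)) /\
  (forall c t, N (lincomb c b) <= 1 -> K (vsub (lincomb c b) (vscale t e)) -> t <= v).
Proof.
have [al [hal hal2]] := coef_bound.
have hcb : forall c j, N (lincomb c b) <= 1 -> Rabs (c j) <= / al.
  move=> c j h. apply: (Rmult_le_reg_l al) => //. rewrite Rinv_r; last lra.
  have := hal2 c j. lra.
pose beta i := \big[Rplus/0]_(j <- index_enum 'I_m) (/ al * Rabs (b j i)).
have hz : forall c i, N (lincomb c b) <= 1 -> Rabs (lincomb c b i) <= beta i.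
  move=> c i h. rewrite /lincomb. apply: Rle_trans (Rabs_big _ _) _.
  apply: Rle_big => j. rewrite Rabs_mult. apply: Rmult_le_compat_r; first exact: Rabs_pos.
  exact: hcb.
pose Tmax := (\big[Rplus/0]_(i <- index_enum 'I_n) (beta i * beta i) + 1) / eps.
have htb : forall c t, N (lincomb c b) <= 1 -> K (vsub (lincomb c b) (vscale t e)) -> t <= Tmax.
  move=> c t h hk. have := tbound hKadd hKsc hpt heps hball i0 hk.
  move=> h1. apply: Rle_trans h1 _. rewrite /Tmax. apply: Rmult_le_compat_r.
    apply: Rlt_le; exact: Rinv_0_lt_compat.
  apply: Rplus_le_compat_r. apply: Rle_big => i.
  have := hz c i h. have := Rabs_pos (lincomb c b i).
  have : Rabs (lincomb c b i) * Rabs (lincomb c b i) = lincomb c b i * lincomb c b i.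
    rewrite -Rabs_mult. apply: Rabs_right. have := Rle_0_sqr (lincomb c b i). rewrite /Rsqr. lra.
  nra.
pose Tset t := exists c, N (lincomb c b) <= 1 /\ K (vsub (lincomb c b) (vscale t e)).
have [v [hv1 hv2]] : exists v, (forall t, Tset t -> t <= v) /\ (forall bb, (forall t, Tset t -> t <= bb) -> v <= bb).
  apply: sup_ex.
    exists 0, (fun _ => 0). rewrite lc_zero Nvz //. split; first lra.
    have -> : vsub vzero (vscale 0 e) = vzero by apply: veqE => i; rewrite /vsub /vzero /vscale; ring.
    done.
  exists Tmax => t [c [h1 h2]]. exact: htb h1 h2.
have hseq : forall k : nat, exists ct : vec m * R, N (lincomb ct.1 b) <= 1 /\
    K (vsub (lincomb ct.1 b) (vscale ct.2 e)) /\ v - / INR (S k) < ct.2.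
  move=> k. apply: NNPP => hno.
  have hpos : 0 < / INR (S k) by apply: Rinv_0_lt_compat; apply: lt_0_INR; apply/ssrnat.ltP.
  have : v <= v - / INR (S k).
    apply: hv2 => t [c [h1 h2]]. apply: Rnot_lt_le => hlt. apply: hno. by exists (c, t).
  lra.
pose cts k := myeps (((fun _ : 'I_m => 0), 0)) (fun ct : vec m * R => N (lincomb ct.1 b) <= 1 /\
    K (vsub (lincomb ct.1 b) (vscale ct.2 e)) /\ v - / INR (S k) < ct.2).
have hcts : forall k, N (lincomb (cts k).1 b) <= 1 /\
    K (vsub (lincomb (cts k).1 b) (vscale (cts k).2 e)) /\ v - / INR (S k) < (cts k).2.
  move=> k. exact: (myeps_spec _ (fun ct : vec m * R => N (lincomb ct.1 b) <= 1 /\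
    K (vsub (lincomb ct.1 b) (vscale ct.2 e)) /\ v - / INR (S k) < ct.2) (hseq k)).
have hbd : forall k j, Rabs ((cts k).1 j) <= / al.
  move=> k j. apply: hcb. exact: (proj1 (hcts k)).
have [phi [cst [hphi hcv]]] := BWd m (fun k => (cts k).1) (/ al) hbd.
have htcv : Un_cv (fun k => (cts (phi k)).2) v.
  move=> eps' heps'. have [N0 HN0] := inv_cv0 hphi heps'. exists N0 => k hk.
  have := HN0 k hk. have [_ [h1 h2]] := hcts (phi k).
  have h3 : (cts (phi k)).2 <= v by apply: hv1; exists (cts (phi k)).1; split => //; exact: (proj1 (hcts (phi k))).
  rewrite /R_dist. move=> h4. apply: Rabs_def1; lra.
exists v, (lincomb cst b); split; first by exists cst.
split.
  have hN1 := Ncont hN (lc_cv hcv).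
  apply: (Rle_cv_lim _ hN1 (CV_const 1)) => k. exact: (proj1 (hcts (phi k))).
split.
  eapply (@hcl (fun k => vsub (lincomb (cts (phi k)).1 b) (vscale (cts (phi k)).2 e))).
    move=> k. exact: (proj1 (proj2 (hcts (phi k)))).
  move=> i. rewrite /vsub /vscale. apply: CV_minus; first exact: (lc_cv hcv).
  apply: CV_mult => //. exact: CV_const.
move=> c t h1 h2. apply: hv1. by exists c.
Qed.

End Main.

Section Final.
Variables (n m : nat) (N : vec n -> R) (K : vec n -> Prop) (e : vec n) (eps : R)
  (i0 : 'I_n) (b : 'I_m -> vec n) (L : vec n -> Prop).
Hypotheses (hN : IsNorm N) (hK0 : K vzero) (hKadd : forall x y, K x -> K y -> K (vadd x y))
  (hKsc : forall a x, 0 <= a -> K x -> K (vscale a x)) (hpt : is_pointed K) (hcl : is_closed K)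
  (heps : 0 < eps) (hball : forall y, inner (vsub y e) (vsub y e) < eps * eps -> K y)
  (hb : lin_indep b) (hL : forall x, L x <-> exists c, x = lincomb c b).

Definition pairv (a c : vec n) : ('I_n + 'I_n)%type -> R :=
  fun i => match i with inl j => a j | inr j => c j end.

Lemma ginner_pair (w : ('I_n + 'I_n)%type -> R) a c :
  ginner _ w (pairv a c) = inner (fun j => w (inl j)) a + inner (fun j => w (inr j)) c.
Proof. rewrite /ginner big_sumType /=. done. Qed.

Lemma delta_lam u x t : DeltaK K e u -> K (vsub x (vscale t e)) -> t <= inner u x.
Proof.
move=> [hu hue] hk. have := hu _ hk. rewrite inner_subr inner_sclr hue. lra.
Qed.

Lemma Lscale r x : L x -> L (vscale r x).
Proof.
move/hL=> [c ->]. apply/hL. exists (fun j => r * c j). by rewrite (lc_scale b).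
Qed.

Lemma Lzero : L vzero.
Proof. apply/hL. exists (fun _ => 0). by rewrite (lc_zero b). Qed.

Lemma Lopp x : L x -> L (vopp x).
Proof.
move=> h. have -> : vopp x = vscale (-1) x by apply: veqE => i; rewrite /vopp /vscale; ring.
exact: Lscale.
Qed.

Theorem final_main : exists v : R,
    IsMin (nu_set N K e L) v /\
    IsMin (fun t => exists u, DeltaK K e u /\
             IsMax (fun s => exists x, L x /\ N x <= 1 /\ s = inner x u) t) v /\
    IsMax (fun t => exists x, L x /\ N x <= 1 /\
             IsMin (fun s => exists u, DeltaK K e u /\ s = inner x u) t) v /\
    IsMax (fun t => exists x, L x /\ N x <= 1 /\ lambda_is K e x t) v.
Proof.
have [v [x0 [hLx0 [hNx0 [hKx0 hv]]]]] := x0_exists i0 hN hK0 hKadd hKsc hpt hcl heps hball hb.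
have hLx0' : L x0 by apply/hL.
have hvL : forall x t, L x -> N x <= 1 -> K (vsub x (vscale t e)) -> t <= v.
  move=> x t /hL [c ->]. exact: hv.
have hv0 : 0 <= v.
  apply: (hvL vzero 0 Lzero); first by rewrite (Nvz hN); lra.
  have -> : vsub vzero (vscale 0 e) = vzero by apply: veqE => i; rewrite /vsub /vscale /vzero; ring.
  done.
have hvH : forall x t, L x -> K (vsub x (vscale t e)) -> t <= v * N x.
  move=> x t hx hk. have := Nge0 hN x. case=> hNx; last first.
    have hx0 := Nzero hN (esym hNx). rewrite -hNx Rmult_0_r.
    apply: Rnot_lt_le => ht. apply: (notneg hKsc hpt heps hball i0 ht).
    rewrite hx0 in hk. move: hk.
    have -> : vsub vzero (vscale t e) = vscale (- t) e by apply: veqE => i; rewrite /vsub /vscale /vzero; ring.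
    done.
  have := hvL (vscale (/ N x) x) (t / N x) (Lscale _ hx).
  rewrite (Nscale hN) Rabs_right; last by apply: Rle_ge; apply: Rlt_le; apply: Rinv_0_lt_compat.
  rewrite Rinv_l; last lra.
  move=> h. have := h (Rle_refl 1).
  have -> : vsub (vscale (/ N x) x) (vscale (t / N x) e) = vscale (/ N x) (vsub x (vscale t e)).
    apply: veqE => i; rewrite /vsub /vscale. field. lra.
  move=> h2. have := h2 (hKsc (Rlt_le _ _ (Rinv_0_lt_compat _ hNx)) hk).
  move=> h3. have := Rmult_le_compat_r (N x) _ _ (Rlt_le _ _ hNx) h3.
  have -> : t / N x * N x = t by field; lra. done.
(* Hahn-Banach on the product *)
pose I := ('I_n + 'I_n)%type.
pose P := fun z : I -> R => mu K e (fun j => z (inl j)) + v * N (fun j => z (inr j)).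
pose M := fun z : I -> R => exists c, z = pairv (lincomb c b) (vopp (lincomb c b)).
have psub : forall a c, P (gadd I a c) <= P a + P c.
  move=> a c. rewrite /P.
  have h1 := mu_sub hKadd hKsc hpt heps hball i0 (fun j => a (inl j)) (fun j => c (inl j)).
  have h2 := Ntri hN (fun j => a (inr j)) (fun j => c (inr j)).
  change (mu K e (vadd (fun j => a (inl j)) (fun j => c (inl j))) +
     v * N (vadd (fun j => a (inr j)) (fun j => c (inr j))) <=
     mu K e (fun j => a (inl j)) + v * N (fun j => a (inr j)) +
     (mu K e (fun j => c (inl j)) + v * N (fun j => c (inr j)))).
  nra.
have phom : forall r a, 0 < r -> P (gsc I r a) = r * P a.
  move=> r a hr. rewrite /P.
  change (mu K e (vscale r (fun j => a (inl j))) + v * N (vscale r (fun j => a (inr j))) =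
    r * (mu K e (fun j => a (inl j)) + v * N (fun j => a (inr j)))).
  rewrite (mu_hom hKadd hKsc hpt heps hball i0) // (Nscale hN) Rabs_right; last lra.
  ring.
have hMsub : subsp I M.
  split; [|split].
  - exists (fun _ => 0). rewrite (lc_zero b). apply: functional_extensionality => -[] i;
      rewrite /gz /pairv /vopp /vzero; ring.
  - move=> a c [c1 ->] [c2 ->]. exists (fun j => c1 j + c2 j). rewrite (lc_add b).
    apply: functional_extensionality => -[] i; rewrite /gadd /pairv /vadd /vopp; ring.
  - move=> r a [c1 ->]. exists (fun j => r * c1 j). rewrite (lc_scale b).
    apply: functional_extensionality => -[] i; rewrite /gsc /pairv /vscale /vopp; ring.
have hlin : linon I M (fun _ => 0).
  split => *; ring.
have hMp : forall z, M z -> 0 <= P z.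
  move=> z [c ->]. rewrite /P.
  change (0 <= mu K e (lincomb c b) + v * N (vopp (lincomb c b))).
  rewrite (Nopp hN).
  suff : - (v * N (lincomb c b)) <= mu K e (lincomb c b) by lra.
  apply: (mu_glb hKadd hKsc hpt heps hball i0) => t ht.
  have hl : L (vopp (lincomb c b)) by apply: Lopp; apply/hL; exists c.
  have := hvH (vopp (lincomb c b)) (- t) hl.
  rewrite (Nopp hN). move=> h.
  suff : - t <= v * N (lincomb c b) by lra.
  apply: h. rewrite /feas in ht.
  have -> : vsub (vopp (lincomb c b)) (vscale (- t) e) = vsub (vscale t e) (lincomb c b).
    apply: veqE => i; rewrite /vsub /vopp /vscale; ring.
  done.
have [w [hw1 hw2]] := HB I P psub phom M (fun _ => 0) hMsub hlin hMp.
pose u := fun j => w (inl j).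
pose w' := fun j => w (inr j).
have hu1 : forall a, inner u a <= mu K e a.
  move=> a. have := hw1 (pairv a vzero). rewrite ginner_pair /P.
  change (inner u a + inner w' vzero <= mu K e a + v * N vzero -> inner u a <= mu K e a).
  rewrite (Nvz hN) (inner_sym w' vzero) inner_0l. lra.
have hw'1 : forall c, inner w' c <= v * N c.
  move=> c. have := hw1 (pairv vzero c). rewrite ginner_pair /P.
  change (inner u vzero + inner w' c <= mu K e vzero + v * N c -> inner w' c <= v * N c).
  have := mu_0 hK0 hKadd hKsc hpt heps hball i0.
  rewrite (inner_sym u vzero) inner_0l. lra.
have huL : forall x, L x -> inner u x = inner w' x.
  move=> x /hL [c ->]. have := hw2 (pairv (lincomb c b) (vopp (lincomb c b))) (ex_intro _ c erefl).
  rewrite ginner_pair. change (inner u (lincomb c b) + inner w' (vopp (lincomb c b)) = 0 ->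
     inner u (lincomb c b) = inner w' (lincomb c b)).
  rewrite inner_oppr. lra.
have huK : dual_cone K u.
  move=> x hx. have := hu1 (vopp x). have := mu_oppK hKadd hKsc hpt heps hball i0 hx.
  rewrite inner_oppr. lra.
have hue : inner u e = 1.
  have := hu1 e. have := hu1 (vopp e).
  have := mu_e hK0 hKadd hKsc hpt heps hball i0.
  have := mu_me hK0 hKadd hKsc hpt heps hball i0.
  rewrite inner_oppr. lra.
have huD : DeltaK K e u by split.
have hux : forall x, L x -> N x <= 1 -> inner u x <= v.
  move=> x hx h. rewrite huL //. have := hw'1 x. nra.
have hux0 : inner u x0 = v.
  apply: Rle_antisym; first exact: hux.
  exact: delta_lam huD hKx0.
have eK := eK heps hball.
have hNx1 : 0 < v -> N x0 = 1.
  move=> hvp. have := hvH x0 v hLx0' hKx0. nra.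
exists v; split; [|split; [|split]].
-
  split.
  + exists u, (vsub u w'). split => //. split.
      move=> x hx. rewrite inner_subl huL //. ring.
    split.
      split.
        exists e; split; last by rewrite hue.
        split.
          split; first lra. split.
            have -> : vadd e (vscale 1 e) = vscale 2 e by apply: veqE => i; rewrite /vadd /vscale; ring.
            apply: hKsc => //; lra.
          have -> : vadd (vopp e) (vscale 1 e) = vzero by apply: veqE => i; rewrite /vadd /vscale /vopp /vzero; ring.
          done.
        move=> a [ha [_ hk]]. apply: Rnot_lt_le => hlt.
        apply: (notneg hKsc hpt heps hball i0 (t := 1 - a)); first lra.
        have <- : vadd (vopp e) (vscale a e) = vscale (- (1 - a)) e.
          apply: veqE => i; rewrite /vadd /vscale /vopp; ring.
        done.
      move=> s [x [[[_ [_ hk]] _] ->]].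
      have := huK _ hk. rewrite inner_addr inner_oppr inner_sclr hue. lra.
    have -> : vsub (vsub u w') u = vopp w' by apply: veqE => i; rewrite /vsub /vopp; ring.
    split.
      case: (Rle_lt_or_eq_dec _ _ hv0) => hvp.
        exists (vopp x0). rewrite (Nopp hN) hNx1 //. split => //.
        rewrite inner_oppl inner_oppr -huL //. lra.
      have hu0 : N (unitv i0) <> 0.
        move=> h. have := Nzero hN h. move=> /(congr1 (fun f => f i0)). rewrite /unitv /vzero eqxx. lra.
      have hu0' : 0 < N (unitv i0) by have := Nge0 hN (unitv i0); lra.
      exists (vscale (/ N (unitv i0)) (unitv i0)). split.
        rewrite (Nscale hN) Rabs_right; last by apply: Rle_ge; apply: Rlt_le; apply: Rinv_0_lt_compat.
        field. lra.
      have := hw'1 (vscale (/ N (unitv i0)) (unitv i0)).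
      have := hw'1 (vopp (vscale (/ N (unitv i0)) (unitv i0))).
      rewrite -hvp !Rmult_0_l inner_oppr inner_oppl. lra.
    move=> s [x [hx ->]]. rewrite inner_oppl -inner_oppr.
    have := hw'1 (vopp x). rewrite (Nopp hN) hx. lra.
  + move=> t [u' [y' [hu' [hy' [hde hdn]]]]].
    have hu'e : 1 <= inner u' e.
      have [[x [[[_ [_ hk]] _] h1]] _] := hde.
      have := hu' _ hk. rewrite inner_addr inner_oppr inner_sclr. lra.
    have [[x [hx ht]] hub] := hdn.
    case: (Rle_lt_or_eq_dec _ _ hv0) => hvp.
      have hn1 : N (vopp x0) = 1 by rewrite (Nopp hN) hNx1.
      have := hub (inner (vsub y' u') (vopp x0)) (ex_intro _ (vopp x0) (conj hn1 erefl)).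
      rewrite inner_subl !inner_oppr hy' //.
      have := hu' _ hKx0. rewrite inner_subr inner_sclr. nra.
    have hn1 : N (vopp x) = 1 by rewrite (Nopp hN).
    have := hub (inner (vsub y' u') (vopp x)) (ex_intro _ (vopp x) (conj hn1 erefl)).
    rewrite inner_oppr -ht -hvp. lra.
-
  split.
  + exists u; split => //. split.
      exists x0; split => //; split => //. by rewrite inner_sym hux0.
    move=> s [x [hx [hNx ->]]]. rewrite inner_sym. exact: hux.
  + move=> t [u' [hu' [_ hub]]]. apply: Rle_trans (hub _ (ex_intro _ x0 (conj hLx0' (conj hNx0 erefl)))).
    rewrite inner_sym. exact: delta_lam hu' hKx0.
-
  split.
  + exists x0; split => //; split => //. split.
      exists u; split => //. by rewrite inner_sym hux0.
    move=> s [u' [hu' ->]]. rewrite inner_sym. exact: delta_lam hu' hKx0.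
  + move=> t [x [hx [hNx [_ hlb]]]]. apply: Rle_trans (hlb _ (ex_intro _ u (conj huD erefl))) _.
    rewrite inner_sym. exact: hux.
-
  split.
  + exists x0; split => //; split => //. split => //. move=> s hs. exact: hvL hLx0' hNx0 hs.
  + move=> t [x [hx [hNx [hk _]]]]. exact: hvL hx hNx hk.
Qed.

End Final.

Theorem mainTheorem7 (n m : nat) (N : vec n -> R) (K : vec n -> Prop) (e : vec n)
  (hm1 : leq 1 m) (hmn : leq (S m) n)
  (hN : IsNorm N)
  (hK : regular_closed_convex_cone K)
  (he : in_interior K e) :
  forall L : vec n -> Prop, in_Gr m L ->
  exists v : R,
    IsMin (nu_set N K e L) v /\
    IsMin (fun t => exists u, DeltaK K e u /\
             IsMax (fun s => exists x, L x /\ N x <= 1 /\ s = inner x u) t) v /\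
    IsMax (fun t => exists x, L x /\ N x <= 1 /\
             IsMin (fun s => exists u, DeltaK K e u /\ s = inner x u) t) v /\
    IsMax (fun t => exists x, L x /\ N x <= 1 /\ lambda_is K e x t) v.
Proof.
move=> L [b [hb hLb]].
have [hcl [[hK0 [hKadd hKsc]] [hpt _]]] := hK.
have [eps [heps hball]] := he.
have hn : leq 1 n by exact: leq_trans hm1 (ltnW hmn).
pose i0 := @Ordinal n 0 hn.
have hL : forall x, L x <-> exists c, x = lincomb c b.
  move=> x; split.
    move/hLb => [c hc]. exists c. exact: veqE.
  move=> [c ->]. apply/hLb. by exists c.
exact: (final_main i0 hN hK0 hKadd hKsc hpt hcl heps hball hb hL).
Qed.
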